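(* Let $\Gamma$ and $\tilde\Gamma$ be two generalized cospectral signed bipartite graphs with a common characteristic polynomial $\phi(x)$ that is irreducible over $\mathbb{Q}$. Suppose their adjacency matrices are $$A=A(\Gamma)=\begin{bmatrix} O & M\\ M^{\mathrm T} & O\end{bmatrix},\qquad \tilde A=A(\tilde\Gamma)=\begin{bmatrix} O & \tilde M\\ \tilde M^{\mathrm T} & O\end{bmatrix}.$$ Then there exists a regular orthogonal matrix $Q$ such that $Q^{\mathrm T}AQ=\tilde A$, where $$Q=\begin{bmatrix} Q_1 & O\\ O & Q_2\end{bmatrix}\quad\text{or}\quad Q=\begin{bmatrix} O & Q_1\\ Q_2 & O\end{bmatrix},$$ with $Q_1$ and $Q_2$ regular rational orthogonal matrices.
   Context: A signed graph is a simple graph with each edge assigned a sign $\pm1$; its adjacency matrix has entry equal to the sign of the edge for adjacent vertices and $0$ otherwise. A signed bipartite graph is a signed graph whose underlying graph is bipartite; the vertices are ordered so that the adjacency matrix has the displayed block form. Two signed graphs with adjacency matrices $A,\tilde A$ are generalized cospectral if $\det(xI-A)=\det(xI-\tilde A)$ and $\det(xI-(J-I-A))=\det(xI-(J-I-\tilde A))$, $J$ the all-ones matrix. A square matrix $Q$ is orthogonal if $Q^{\mathrm T}Q=I$, rational if all entries are rational, and regular if $Qe=e$, where $e$ is the all-ones vector. *)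

(* Defs.v *)
From mathcomp Require Import all_boot all_order all_algebra.
Set Implicit Arguments. Unset Strict Implicit. Unset Printing Implicit Defensive.
Import GRing.Theory Num.Theory.
Local Open Scope ring_scope.

(* We also require Q Q^T = I, which (over a field)
   is equivalent for square matrices and forces the two dimensions to agree,
   so that the definition can be applied to matrices whose dimensions are only
   propositionally equal. *)
Definition orthogonal_mx (m n : nat) (Q : 'M[rat]_(m, n)) : Prop :=
  Q^T *m Q = 1%:M /\ Q *m Q^T = 1%:M.

Definition regular (m n : nat) (Q : 'M[rat]_(m, n)) : Prop :=
  Q *m (const_mx 1 : 'cV[rat]_n) = (const_mx 1 : 'cV[rat]_m).

Definition signed_block (p q : nat) (M : 'M[rat]_(p, q)) : Prop :=
  forall i j, M i j \in [:: -1; 0; 1].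

Definition bip_adj (p q : nat) (M : 'M[rat]_(p, q)) : 'M[rat]_(p + q) :=
  block_mx 0 M M^T 0.

Definition gen_cospectral (n m : nat) (A : 'M[rat]_n) (B : 'M[rat]_m) : Prop :=
  char_poly A = char_poly B /\
  char_poly (const_mx 1 - 1%:M - A) = char_poly (const_mx 1 - 1%:M - B).

(* Main.v *)
From mathcomp Require Import all_boot all_order all_algebra.
From mathcomp Require Import ring.
From mathcomp Require Import zify.
From mathcomp Require Import lra.
Require Import Defs.
Set Implicit Arguments. Unset Strict Implicit. Unset Printing Implicit Defensive.
Import GRing.Theory Num.Theory.
Local Open Scope ring_scope.

Lemma poly_vanish (p : {poly rat}) : (forall x, p.[x] = 0) -> p = 0.
Proof.
move=> H; apply/eqP; apply: contraT => p0.
have := @max_poly_roots _ p [seq i%:R | i <- iota 0 (size p)] p0.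
rewrite size_map size_iota ltnn; apply.
  by apply/allP => x /mapP [i _ ->]; rewrite /root H.
rewrite map_inj_uniq ?iota_uniq //.
by move=> i j /eqP; rewrite eqr_nat => /eqP.
Qed.

Lemma irr_coprime (p q : {poly rat}) :
  irreducible_poly p -> ~~ (p %| q) -> coprimep p q.
Proof.
move=> [_ Hirr] npq; rewrite coprimep_def.
case: (eqVneq (size (gcdp p q)) 1%N) => // H.
have := Hirr _ H (dvdp_gcdl p q) => /eqp_dvdl Hg.
by move: npq; rewrite -Hg dvdp_gcdr.
Qed.

Lemma irr_prime (p q r : {poly rat}) :
  irreducible_poly p -> p %| q * r -> p %| q \/ p %| r.
Proof.
move=> Hp Hd; case: (boolP (p %| q)) => H; first by left.
by right; rewrite -(Gauss_dvdpr _ (irr_coprime Hp H)).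
Qed.

Lemma horner_kill_dvd n (A : 'M[rat]_n.+1) (v : 'cV_n.+1) (g : {poly rat}) :
  v != 0 -> irreducible_poly (char_poly A) -> horner_mx A g *m v = 0 ->
  char_poly A %| g.
Proof.
move=> v0 Hirr Hg; apply: contraT => nd.
have /Bezout_eq1_coprimepP [[u1 u2] /= Hu] := irr_coprime Hirr nd.
have := congr1 (fun P => horner_mx A P *m v) Hu.
rewrite /= rmorphD !rmorphM /= Cayley_Hamilton mulr0 add0r rmorph1 mul1mx.
by rewrite -mulmxA Hg mulmx0 => /esym/eqP; rewrite (negPf v0).
Qed.

Lemma det_rank1 n (u : 'cV[rat]_n) (v : 'rV[rat]_n) :
  \det (1%:M + u *m v) = 1 + (v *m u) 0 0.
Proof.
pose P : 'M[rat]_(n + 1) := block_mx 1%:M u (- v) 1%:M.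
have E1 : P = block_mx 1%:M 0 (- v) 1%:M *m block_mx 1%:M u 0 (1%:M + v *m u).
  rewrite mulmx_block ?mul1mx ?mul0mx ?mulmx0 ?mulmx1 ?addr0 ?add0r.
  by rewrite mulNmx addrCA addNr addr0.
have E2 : P = block_mx (1%:M + u *m v) u 0 1%:M *m block_mx 1%:M 0 (- v) 1%:M.
  rewrite mulmx_block ?mul1mx ?mul0mx ?mulmx0 ?mulmx1 ?addr0 ?add0r.
  by rewrite mulmxN addrK.
have := congr1 determinant E1; rewrite E2 !det_mulmx det_lblock det_ublock !det1 !mul1r ?mulr1.
rewrite det_ublock det1 mul1r det_mx11 !mxE eqxx /= => ->.
by rewrite mulr1n.
Qed.

Definition ev n : 'cV[rat]_n := const_mx 1.

Lemma horner_char n (A : 'M[rat]_n) y : (char_poly A).[y] = \det (y%:M - A).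
Proof.
rewrite /char_poly -horner_evalE -det_map_mx; congr (\det _).
apply/matrixP => i j; rewrite !mxE /horner_evalE.
by rewrite /= horner_evalE hornerD hornerN hornerMn hornerX hornerC.
Qed.

Lemma J_ev n : (const_mx 1 : 'M[rat]_n) = ev n *m (ev n)^T.
Proof.
by apply/matrixP => i j; rewrite !mxE big_ord1 !mxE mulr1.
Qed.

Lemma det_pert n (A : 'M[rat]_n) y :
  \det (y%:M - (const_mx 1 - 1%:M - A)) = (-1) ^+ n * \det ((- y - 1)%:M - A + const_mx 1).
Proof.
rewrite -detZ; congr (\det _); apply/matrixP => i j; rewrite !mxE.
case: (i == j); rewrite /= ?mulr1n ?mulr0n; ring.
Qed.

Lemma s_eq n (A B : 'M[rat]_n) y :
  char_poly A = char_poly B ->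
  char_poly (const_mx 1 - 1%:M - A) = char_poly (const_mx 1 - 1%:M - B) ->
  (char_poly A).[y] != 0 ->
  ((ev n)^T *m invmx (y%:M - A) *m ev n) 0 0 =
  ((ev n)^T *m invmx (y%:M - B) *m ev n) 0 0.
Proof.
move=> HAB HJ Hy.
have key : forall C : 'M[rat]_n, (char_poly C).[y] != 0 ->
   \det (y%:M - C + const_mx 1) = (char_poly C).[y] *
       (1 + ((ev n)^T *m invmx (y%:M - C) *m ev n) 0 0).
  move=> C HC; have U : y%:M - C \in unitmx by rewrite unitmxE unitfE -horner_char.
  have -> : y%:M - C + const_mx 1 = (y%:M - C) *m (1%:M + (invmx (y%:M - C) *m ev n) *m (ev n)^T).
    by rewrite mulmxDr mulmx1 !mulmxA mulmxV // mul1mx J_ev.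
  by rewrite det_mulmx det_rank1 horner_char mulmxA.
have HJy : \det (y%:M - A + const_mx 1) = \det (y%:M - B + const_mx 1).
  have := congr1 (fun p => p.[- y - 1]) HJ.
  rewrite /= !horner_char !det_pert.
  have -> : - (- y - 1) - 1 = y by ring.
  by apply: mulfI; rewrite expf_neq0 // oppr_eq0 oner_eq0.
have HyB : (char_poly B).[y] != 0 by rewrite -HAB.
move: HJy; rewrite (key A Hy) (key B HyB) -HAB => /(mulfI Hy).
by move/addrI.
Qed.

Lemma horner_mx_coef n (A : 'M[rat]_n.+1) (p : {poly rat}) :
  horner_mx A p = \sum_(i < size p) p`_i *: A ^+ i.
Proof.
rewrite -{1}(coefK p) poly_def rmorph_sum; apply: eq_bigr => i _.
by rewrite /= horner_mxZ rmorphXn /= horner_mx_X.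
Qed.

Definition walk n (A : 'M[rat]_n) k := ((ev n)^T *m A ^+ k *m ev n) 0 0.

Lemma walk_horner n (A : 'M[rat]_n.+1) (p : {poly rat}) :
  ((ev n.+1)^T *m horner_mx A p *m ev n.+1) 0 0 = \sum_(i < size p) p`_i * walk A i.
Proof.
rewrite horner_mx_coef mulmx_sumr mulmx_suml summxE; apply: eq_bigr => i _.
by rewrite -scalemxAr -scalemxAl mxE.
Qed.

Fixpoint Ppoly (d : nat -> rat) k : {poly rat} :=
  match k with 0 => 0 | k.+1 => 'X * Ppoly d k + (d k)%:P end.

Lemma coef_Ppoly d k i : (Ppoly d k)`_i = if (i < k)%N then d (k - 1 - i)%N else 0.
Proof.
elim: k i => [|k IH] i /=; first by rewrite coef0.
rewrite coefD coefXM coefC; case: i => [|i] /=.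
  by rewrite add0r subn0 subn1.
rewrite addr0 IH ltnS; case: ifP => // _; congr d; lia.
Qed.

Lemma tw_rec n (A : 'M[rat]_n) y k : (y%:M - A) \in unitmx ->
  ((ev n)^T *m A ^+ k.+1 *m invmx (y%:M - A) *m ev n) 0 0 =
  y * ((ev n)^T *m A ^+ k *m invmx (y%:M - A) *m ev n) 0 0 - walk A k.
Proof.
move=> U.
have AR : A *m invmx (y%:M - A) = y *: invmx (y%:M - A) - 1%:M.
  have := mulmxV U; rewrite mulmxBl mul_scalar_mx => <-.
  by rewrite opprB addrCA subrr addr0.
rewrite exprSr -mulmxE.
have -> : (ev n)^T *m (A ^+ k *m A) *m invmx (y%:M - A) *m ev n =
   (ev n)^T *m A ^+ k *m (A *m invmx (y%:M - A)) *m ev n by rewrite !mulmxA.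
rewrite AR mulmxBr mulmxBl mulmx1 -scalemxAr -scalemxAl.
have hB : forall M N : 'M[rat]_1, (M - N) 0 0 = M 0 0 - N 0 0 by move=> M N; rewrite !mxE.
by rewrite hB mxE.
Qed.

Definition tw n (C : 'M[rat]_n) y k :=
  ((ev n)^T *m C ^+ k *m invmx (y%:M - C) *m ev n) 0 0.

Lemma tw_sum n (C : 'M[rat]_n.+1) y :
  \sum_(k < size (char_poly C)) (char_poly C)`_k * tw C y k = 0.
Proof.
have := congr1 (fun M => ((ev n.+1)^T *m M *m invmx (y%:M - C) *m ev n.+1) 0 0)
   (Cayley_Hamilton C).
rewrite /= mulmx0 !mul0mx [X in _ = X]mxE => H; apply: etrans H; symmetry.
rewrite horner_mx_coef mulmx_sumr !mulmx_suml summxE; apply: eq_bigr => i _.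
by rewrite -scalemxAr -!scalemxAl mxE.
Qed.

Lemma walk_eq_small n (A B : 'M[rat]_n.+1) :
  char_poly A = char_poly B ->
  (forall y, (char_poly A).[y] != 0 -> tw A y 0 = tw B y 0) ->
  forall m, (m < n.+1)%N -> walk A m = walk B m.
Proof.
move=> HAB Hs.
set phi := char_poly A.
pose d j := walk A j - walk B j.
have delta : forall y, phi.[y] != 0 -> forall k, tw A y k - tw B y k = - (Ppoly d k).[y].
  move=> y Hy; have UA : y%:M - A \in unitmx by rewrite unitmxE unitfE -horner_char.
  have UB : y%:M - B \in unitmx by rewrite unitmxE unitfE -horner_char -HAB.
  elim=> [|k IH]; first by rewrite (Hs y Hy) subrr horner0 oppr0.
  rewrite /tw !tw_rec // -/(tw A y k) -/(tw B y k) /=.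
  have -> : y * tw A y k - walk A k - (y * tw B y k - walk B k) =
            y * (tw A y k - tw B y k) - d k by rewrite /d; ring.
  by rewrite IH hornerD hornerC (mulrC 'X) hornerMX; ring.
pose G := \sum_(k < size phi) phi`_k *: Ppoly d k.
have G0 : G = 0.
  have : G * phi = 0.
    apply: poly_vanish => y; rewrite hornerM.
    case: (eqVneq phi.[y] 0) => [->|Hy]; first by rewrite mulr0.
    suff -> : G.[y] = 0 by rewrite mul0r.
    rewrite /G horner_sum.
    have -> : \sum_(k < size phi) (phi`_k *: Ppoly d k).[y] =
       - (\sum_(k < size phi) phi`_k * tw A y k - \sum_(k < size phi) phi`_k * tw B y k).
      rewrite -sumrB -sumrN; apply: eq_bigr => k _.
      by rewrite hornerZ -mulrBr -mulrN (delta y Hy) opprK.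
    by rewrite /phi tw_sum HAB tw_sum subrr oppr0.
  move/eqP; rewrite mulf_eq0 => /orP [/eqP //|].
  by rewrite (negPf (monic_neq0 (char_poly_monic A))).
have dm : forall m, (m < n.+1)%N -> d m = 0.
  elim/ltn_ind => m IHm Hm.
  have := congr1 (fun p : {poly rat} => p`_(n - m)) G0.
  rewrite /= coef0 /G coef_sum /phi size_char_poly big_ord_recr.
  rewrite big1; last first.
    move=> k _; rewrite coefZ coef_Ppoly; case: ifP => H; last by rewrite mulr0.
    by move: H; rewrite /= => H; have Hk := ltn_ord k; rewrite IHm ?mulr0 //; lia.
  change (0 + ((char_poly A)`_n.+1 *: Ppoly d n.+1)`_(n - m) = 0 -> d m = 0).
  rewrite add0r coefZ coef_Ppoly.
  have -> : (char_poly A)`_n.+1 = 1.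
    by have := monicP (char_poly_monic A); rewrite lead_coefE size_char_poly.
  rewrite mul1r ifT; last by lia.
  by have -> : (n.+1 - 1 - (n - m) = m)%N by lia.
by move=> m Hm; apply/eqP; rewrite -subr_eq0; apply/eqP; exact: dm.
Qed.

Lemma horner_modp n (A : 'M[rat]_n.+1) g :
  horner_mx A g = horner_mx A (g %% char_poly A).
Proof.
by rewrite {1}(divp_eq g (char_poly A)) rmorphD rmorphM /= Cayley_Hamilton mulr0 add0r.
Qed.

Lemma walk_eq_poly n (A B : 'M[rat]_n.+1) :
  char_poly A = char_poly B -> (forall m, (m < n.+1)%N -> walk A m = walk B m) ->
  forall g, ((ev n.+1)^T *m horner_mx A g *m ev n.+1) 0 0 =
            ((ev n.+1)^T *m horner_mx B g *m ev n.+1) 0 0.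
Proof.
move=> HAB Hw g; rewrite horner_modp [in RHS]horner_modp -HAB !walk_horner.
have Hs : leq (size (g %% char_poly A)) n.+1.
  by rewrite -ltnS -(size_char_poly A) ltn_modp monic_neq0 // char_poly_monic.
by apply: eq_bigr => i _; rewrite Hw // (leq_trans (ltn_ord i) Hs).
Qed.

Lemma horner_Xn n (A : 'M[rat]_n.+1) k : horner_mx A ('X^k) = A ^+ k.
Proof. by rewrite rmorphXn /= horner_mx_X. Qed.

Lemma walk_eq_all n (A B : 'M[rat]_n.+1) :
  char_poly A = char_poly B -> (forall m, (m < n.+1)%N -> walk A m = walk B m) ->
  forall k, walk A k = walk B k.
Proof.
by move=> HAB Hw k; have := walk_eq_poly HAB Hw ('X^k); rewrite !horner_Xn.
Qed.

Definition Wmx n (C : 'M[rat]_n) : 'M[rat]_n := \matrix_(i, j) (C ^+ j *m ev n) i 0.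

Lemma mul_cols m k n (M N : 'M[rat]_(m, k)) (W : 'M[rat]_(k, n)) :
  (forall j, M *m (\col_i W i j) = N *m (\col_i W i j)) -> M *m W = N *m W.
Proof.
move=> H; apply/matrixP => i j.
have := congr1 (fun X : 'M[rat]_(m,1) => X i 0) (H j); rewrite !mxE => E.
rewrite ?mxE; etransitivity; [|etransitivity; [exact E|]];
  by apply: eq_bigr => r _; rewrite mxE.
Qed.

Lemma col_W n (C : 'M[rat]_n) j : (\col_i Wmx C i j) = C ^+ j *m ev n.
Proof. by apply/matrixP => i k; rewrite !mxE ord1. Qed.

Lemma horner_poly_W n (C : 'M[rat]_n.+1) (c : 'cV[rat]_n.+1) :
  horner_mx C (\poly_(j < n.+1) c (inord j) 0) *m ev n.+1 = Wmx C *m c.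
Proof.
rewrite poly_def rmorph_sum mulmx_suml; apply/matrixP => i k.
rewrite summxE !mxE; apply: eq_bigr => j _.
rewrite /= horner_mxZ horner_Xn -scalemxAl !mxE ord1 mulrC inord_val; congr (_ * _).
Qed.

Lemma ev_neq0 n : ev n.+1 != 0.
Proof.
by apply/eqP => H; have := congr1 (fun M : 'cV[rat]_n.+1 => M 0 0) H; rewrite !mxE => /eqP; rewrite oner_eq0.
Qed.

Lemma W_unit n (C : 'M[rat]_n.+1) : irreducible_poly (char_poly C) -> Wmx C \in unitmx.
Proof.
move=> Hirr; rewrite unitmxE unitfE -det_tr; apply/negP => /det0P [v v0 Hv].
pose g := \poly_(j < n.+1) v^T (inord j) 0.
have Hg : horner_mx C g *m ev n.+1 = 0.
  by rewrite horner_poly_W -(trmxK (Wmx C *m v^T)) trmx_mul trmxK Hv trmx0.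
have := horner_kill_dvd (ev_neq0 n) Hirr Hg.
have g0 : g != 0.
  apply: contraNneq v0 => g0.
  apply/eqP/rowP => j.
  have := congr1 (fun p : {poly rat} => p`_j) g0.
  by rewrite /= coef_poly ltn_ord coef0 inord_val !mxE.
move/(dvdp_leq g0); rewrite size_char_poly.
by have := size_poly n.+1 (fun j => v^T (inord j) 0); rewrite -/g => H1 H2; have := leq_trans H2 H1; rewrite ltnn.
Qed.

Lemma trmx_exp n (A : 'M[rat]_n.+1) k : A^T = A -> (A ^+ k)^T = A ^+ k.
Proof.
move=> HA; elim: k => [|k IH]; first by rewrite !expr0 trmx1.
by rewrite exprS -mulmxE trmx_mul IH HA mulmxE -exprSr exprS.
Qed.

Lemma horner_tr n (A : 'M[rat]_n.+1) g : A^T = A -> (horner_mx A g)^T = horner_mx A g.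
Proof.
move=> HA; rewrite horner_mx_coef; apply/matrixP => i j; rewrite !mxE !summxE.
by apply: eq_bigr => k _; rewrite !mxE -[in LHS](trmx_exp k HA) mxE.
Qed.

Lemma gram n (A : 'M[rat]_n.+1) : A^T = A ->
  (Wmx A)^T *m Wmx A = \matrix_(i, j) walk A (i + j).
Proof.
move=> HA; apply/matrixP => i j; rewrite [RHS]mxE /walk exprD.
have -> : (ev n.+1)^T *m (A ^+ i * A ^+ j) *m ev n.+1 =
          (A ^+ i *m ev n.+1)^T *m (A ^+ j *m ev n.+1).
  by rewrite trmx_mul trmx_exp // -mulmxE !mulmxA.
rewrite !mxE; apply: eq_bigr => r _; rewrite !mxE.
by congr (_ * _); apply: eq_bigr => s _; rewrite !mxE.
Qed.

Lemma mul_col m k n (M : 'M[rat]_(m, k)) (W : 'M[rat]_(k, n)) j :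
  M *m (\col_i W i j) = \col_i (M *m W) i j.
Proof.
apply/matrixP => i l; rewrite !mxE; apply: eq_bigr => r _; by rewrite mxE.
Qed.

Lemma pow_comm n (A Y : 'M[rat]_n.+1) k : Y *m A = A *m Y -> Y *m A ^+ k = A ^+ k *m Y.
Proof.
move=> H; elim: k => [|k IH]; first by rewrite expr0 mulmx1 mul1mx.
by rewrite exprSr -mulmxE mulmxA IH -mulmxA H mulmxA.
Qed.

Lemma Q_exists n (A B : 'M[rat]_n.+1) : A^T = A -> B^T = B ->
  char_poly A = char_poly B -> irreducible_poly (char_poly A) ->
  (forall k, walk A k = walk B k) ->
  let Q := Wmx A *m invmx (Wmx B) in
  [/\ Q^T *m Q = 1%:M, Q *m Q^T = 1%:M, Q *m ev n.+1 = ev n.+1 & Q *m B = A *m Q].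
Proof.
move=> HA HB HAB Hirr Hw Q.
have UB : Wmx B \in unitmx by apply: W_unit; rewrite -HAB.
have QW : Q *m Wmx B = Wmx A by rewrite /Q mulmxKV.
have QtQ : Q^T *m Q = 1%:M.
  have G : (Wmx A)^T *m Wmx A = (Wmx B)^T *m Wmx B.
    by rewrite !gram //; apply/matrixP => i j; rewrite !mxE Hw.
  rewrite /Q trmx_mul mulmxA -(mulmxA _ _ (Wmx A)) G mulmxA -trmx_mul.
  by rewrite -mulmxA mulmxV // trmx1 mul1mx.
have Qcol : forall j : 'I_n.+1, Q *m (B ^+ j *m ev n.+1) = A ^+ j *m ev n.+1.
  by move=> j; rewrite -!col_W mul_col QW.
have Qpoly : forall g, Q *m (horner_mx B g *m ev n.+1) = horner_mx A g *m ev n.+1.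
  move=> g; rewrite horner_modp [in RHS]horner_modp -HAB !horner_mx_coef.
  have Hs : leq (size (g %% char_poly A)) n.+1.
    by rewrite -ltnS -(size_char_poly A) ltn_modp monic_neq0 // char_poly_monic.
  rewrite !mulmx_suml mulmx_sumr; apply: eq_bigr => i _.
  by rewrite -!scalemxAl -scalemxAr (Qcol (Ordinal (leq_trans (ltn_ord i) Hs))).
split => //.
- exact: mulmx1C.
- by have := Qpoly 1; rewrite !rmorph1 !mul1mx.
apply: (can_inj (mulmxK UB)); apply: mul_cols => j; rewrite col_W.
have E1 : B *m (B ^+ j *m ev n.+1) = B ^+ j.+1 *m ev n.+1 by rewrite mulmxA mulmxE -exprS.
rewrite -mulmxA E1 -horner_Xn Qpoly horner_Xn -mulmxA (Qcol j).
by rewrite mulmxA mulmxE -exprS.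
Qed.

Lemma comm_poly n (A Y : 'M[rat]_n.+1) : irreducible_poly (char_poly A) ->
  Y *m A = A *m Y -> exists g, Y = horner_mx A g.
Proof.
move=> Hirr HY; have UA := W_unit Hirr.
pose c := invmx (Wmx A) *m (Y *m ev n.+1).
exists (\poly_(j < n.+1) c (inord j) 0).
set g := \poly_(j < n.+1) _.
have Hg : horner_mx A g *m ev n.+1 = Y *m ev n.+1 by rewrite horner_poly_W mulKVmx.
apply: (can_inj (mulmxK UA)); apply: mul_cols => j; rewrite col_W.
rewrite mulmxA (pow_comm _ HY) -mulmxA -Hg mulmxA -horner_Xn.
by rewrite mulmxA; congr (_ *m _); exact: (comm_horner_mx2 A 'X^j g).
Qed.

Lemma sign_lemma n (A Y : 'M[rat]_n.+1) g : irreducible_poly (char_poly A) ->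
  Y = horner_mx A g -> Y *m Y = 1%:M -> Y = 1%:M \/ Y = - 1%:M.
Proof.
move=> Hirr HY HYY.
have H0 : horner_mx A ((g - 1) * (g + 1)) *m ev n.+1 = 0.
  have -> : (g - 1) * (g + 1) = g * g - 1 by ring.
  by rewrite rmorphB rmorphM rmorph1 /= -HY -mulmxE HYY subrr mul0mx.
case: (irr_prime Hirr (horner_kill_dvd (ev_neq0 n) Hirr H0)) => /dvdpP [qq Hq].
- left; apply/eqP; rewrite -subr_eq0; apply/eqP.
  have := congr1 (horner_mx A) Hq; rewrite rmorphM /= Cayley_Hamilton mulr0.
  by rewrite rmorphB rmorph1 /= -HY.
- right; apply/eqP; rewrite -addr_eq0; apply/eqP.
  have := congr1 (horner_mx A) Hq; rewrite rmorphM /= Cayley_Hamilton mulr0.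
  by rewrite rmorphD rmorph1 /= -HY.
Qed.


Lemma core_sq n (A B DA DB : 'M[rat]_n.+1) :
  A^T = A -> B^T = B -> DA^T = DA -> DB^T = DB ->
  DA *m DA = 1%:M -> DB *m DB = 1%:M ->
  DA *m A = - (A *m DA) -> DB *m B = - (B *m DB) ->
  char_poly A = char_poly B ->
  char_poly (const_mx 1 - 1%:M - A) = char_poly (const_mx 1 - 1%:M - B) ->
  irreducible_poly (char_poly A) ->
  exists Q : 'M[rat]_n.+1,
    [/\ Q^T *m Q = 1%:M, Q *m Q^T = 1%:M, Q *m ev n.+1 = ev n.+1,
        Q^T *m A *m Q = B & (Q *m DB = DA *m Q \/ Q *m DB = - (DA *m Q))].
Proof.
move=> HA HB HDA HDB DA2 DB2 DAA DBB HAB HJ Hirr.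
have Hw0 : forall m, (m < n.+1)%N -> walk A m = walk B m.
  apply: walk_eq_small => // y Hy; rewrite /tw !expr0 !mulmx1.
  exact: s_eq.
have Hw := walk_eq_all HAB Hw0.
have [QtQ QQt Qe QB] := Q_exists HA HB HAB Hirr Hw.
set Q := Wmx A *m invmx (Wmx B) in QtQ QQt Qe QB *; clearbody Q.
exists Q; split => //.
  by rewrite -mulmxA -QB mulmxA QtQ mul1mx.
have QtA : Q^T *m A = B *m Q^T.
  by rewrite -HB -HA -trmx_mul -QB trmx_mul HB.
pose X := Q *m DB *m Q^T.
have XA : X *m A = - (A *m X).
  rewrite /X -mulmxA QtA !mulmxA -(mulmxA Q) DBB mulmxN mulNmx; congr (- _).
  by rewrite mulmxA QB.
pose Y := DA *m X.
have YA : Y *m A = A *m Y.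
  by rewrite /Y -mulmxA XA mulmxN (mulmxA DA A X) DAA mulNmx opprK -mulmxA.
have [g Hg] := comm_poly Hirr YA.
have Xt : X^T = X by rewrite /X !trmx_mul trmxK HDB mulmxA.
have XDA : X *m DA = DA *m X.
  have := horner_tr g HA; rewrite -Hg /Y trmx_mul Xt HDA => ->.
  done.
have YY : Y *m Y = 1%:M.
  rewrite /Y mulmxA -(mulmxA DA X DA) XDA mulmxA DA2 mul1mx /X.
  rewrite -!mulmxA (mulmxA Q^T) QtQ mul1mx (mulmxA DB) DB2 mul1mx.
  exact: QQt.
have XY : X = DA *m Y by rewrite /Y mulmxA DA2 mul1mx.
have QDB : Q *m DB = X *m Q by rewrite /X -mulmxA QtQ mulmx1.
case: (sign_lemma Hirr Hg YY) => HY; [left|right];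
  by rewrite QDB XY HY ?mulmx1 ?mulmxN ?mulNmx ?mulmx1.
Qed.

Lemma core_gen n m (A : 'M[rat]_n) (B : 'M[rat]_m) (DA : 'M[rat]_n) (DB : 'M[rat]_m) :
  A^T = A -> B^T = B -> DA^T = DA -> DB^T = DB ->
  DA *m DA = 1%:M -> DB *m DB = 1%:M ->
  DA *m A = - (A *m DA) -> DB *m B = - (B *m DB) ->
  char_poly A = char_poly B ->
  char_poly (const_mx 1 - 1%:M - A) = char_poly (const_mx 1 - 1%:M - B) ->
  irreducible_poly (char_poly A) ->
  exists Q : 'M[rat]_(n, m),
    [/\ Q^T *m Q = 1%:M, Q *m Q^T = 1%:M, Q *m ev m = ev n,
        Q^T *m A *m Q = B & (Q *m DB = DA *m Q \/ Q *m DB = - (DA *m Q))].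
Proof.
move=> HA HB HDA HDB DA2 DB2 DAA DBB HAB HJ Hirr.
have nm : n = m.
  by have := congr1 (fun p : {poly rat} => size p) HAB; rewrite /= !size_char_poly => -[].
subst m; case: n A B DA DB HA HB HDA HDB DA2 DB2 DAA DBB HAB HJ Hirr => [|n].
  move=> A B DA DB _ _ _ _ _ _ _ _ _ _ [H _]; move: H; rewrite size_char_poly ltnn //.
move=> *; exact: core_sq.
Qed.

Lemma mx_eqN m n (a : 'M[rat]_(m, n)) : - a = a -> a = 0.
Proof.
move=> E; apply/matrixP => i j; have := congr1 (fun M : 'M[rat]_(m, n) => M i j) E.
rewrite !mxE => H; lra.
Qed.

Definition Dsg p q : 'M[rat]_(p + q) := block_mx 1%:M 0 0 (- 1%:M).

Lemma Dsg_tr p q : (Dsg p q)^T = Dsg p q.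
Proof. by rewrite /Dsg tr_block_mx !trmx0 linearN /= !trmx1. Qed.

Lemma Dsg2 p q : Dsg p q *m Dsg p q = 1%:M.
Proof.
rewrite /Dsg mulmx_block !mulmx0 !mul0mx !mulmx1 !addr0 !add0r mulmxN mulNmx opprK mulmx1.
by rewrite -scalar_mx_block.
Qed.

Lemma Dsg_anti p q (M : 'M[rat]_(p, q)) :
  Dsg p q *m bip_adj M = - (bip_adj M *m Dsg p q).
Proof.
rewrite /Dsg /bip_adj !mulmx_block !mulmx0 !mul0mx !mulmx1 !mul1mx !addr0 !add0r.
rewrite !mulmxN !mulNmx !mul1mx !mulmx1.
by rewrite opp_block_mx !oppr0 opprK.
Qed.

Lemma block_sign_pos p q p' q' (Q : 'M[rat]_(p + q, p' + q')) :
  Q *m Dsg p' q' = Dsg p q *m Q -> Q = block_mx (ulsubmx Q) 0 0 (drsubmx Q).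
Proof.
rewrite -{1 2}(submxK Q) /Dsg !mulmx_block !mulmx0 !mul0mx !mulmx1 !mul1mx !addr0 !add0r.
rewrite !mulmxN !mulNmx !mulmx1 !mul1mx => /eq_block_mx [_ Hb Hc _].
by rewrite -{1}(submxK Q) (mx_eqN Hb) (mx_eqN (esym Hc)).
Qed.

Lemma block_sign_neg p q p' q' (Q : 'M[rat]_(p + q, p' + q')) :
  Q *m Dsg p' q' = - (Dsg p q *m Q) -> Q = block_mx 0 (ursubmx Q) (dlsubmx Q) 0.
Proof.
rewrite -{1 2}(submxK Q) /Dsg !mulmx_block !mulmx0 !mul0mx !mulmx1 !mul1mx !addr0 !add0r.
rewrite !mulmxN !mulNmx !mulmx1 !mul1mx opp_block_mx opprK => /eq_block_mx [Ha _ _ Hd].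
by rewrite -{1}(submxK Q) (mx_eqN (esym Ha)) (mx_eqN (etrans Hd (opprK _))).
Qed.

Lemma ev_split p q : (const_mx 1 : 'cV[rat]_(p + q)) = col_mx (const_mx 1) (const_mx 1).
Proof. by rewrite col_mx_const. Qed.

Lemma diag_orth p q p' q' (a : 'M[rat]_(p, p')) (d : 'M[rat]_(q, q')) :
  orthogonal_mx (block_mx a 0 0 d) -> regular (block_mx a 0 0 d) ->
  [/\ orthogonal_mx a, regular a, orthogonal_mx d & regular d].
Proof.
rewrite /orthogonal_mx /regular tr_block_mx !trmx0 !mulmx_block !mulmx0 !mul0mx !addr0 !add0r.
rewrite !ev_split mul_block_col !mul0mx !addr0 !add0r !scalar_mx_block.
by move=> [/eq_block_mx [H1 _ _ H2] /eq_block_mx [H3 _ _ H4]] /eq_col_mx [H5 H6].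
Qed.

Lemma anti_orth p q p' q' (b : 'M[rat]_(p, q')) (c : 'M[rat]_(q, p')) :
  orthogonal_mx (block_mx 0 b c 0) -> regular (block_mx 0 b c 0) ->
  [/\ orthogonal_mx b, regular b, orthogonal_mx c & regular c].
Proof.
rewrite /orthogonal_mx /regular tr_block_mx !trmx0 !mulmx_block !mulmx0 !mul0mx !addr0 !add0r.
rewrite !ev_split mul_block_col !mul0mx !addr0 !add0r !scalar_mx_block.
by move=> [/eq_block_mx [H1 _ _ H2] /eq_block_mx [H3 _ _ H4]] /eq_col_mx [H5 H6].
Qed.

Theorem theorem3p1 (p q p' q' : nat)
  (M : 'M[rat]_(p, q)) (Mt : 'M[rat]_(p', q')) :
  signed_block M -> signed_block Mt ->
  gen_cospectral (bip_adj M) (bip_adj Mt) ->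
  irreducible_poly (char_poly (bip_adj M)) ->
  exists Q : 'M[rat]_(p + q, p' + q'),
    [/\ orthogonal_mx Q, regular Q,
        Q^T *m bip_adj M *m Q = bip_adj Mt &
        (exists (Q1 : 'M[rat]_(p, p')) (Q2 : 'M[rat]_(q, q')),
            [/\ Q = block_mx Q1 0 0 Q2,
                orthogonal_mx Q1, regular Q1, orthogonal_mx Q2 & regular Q2])
        \/
        (exists (Q1 : 'M[rat]_(p, q')) (Q2 : 'M[rat]_(q, p')),
            [/\ Q = block_mx 0 Q1 Q2 0,
                orthogonal_mx Q1, regular Q1, orthogonal_mx Q2 & regular Q2])].
Proof.
move=> _ _ [HAB HJ] Hirr.
have HA : forall a b (N : 'M[rat]_(a, b)), (bip_adj N)^T = bip_adj N.
  by move=> a b N; rewrite /bip_adj tr_block_mx !trmx0 trmxK.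
have [Q [QtQ QQt Qe QAQ Hs]] := core_gen (HA _ _ M) (HA _ _ Mt) (Dsg_tr p q)
  (Dsg_tr p' q') (Dsg2 p q) (Dsg2 p' q') (Dsg_anti M) (Dsg_anti Mt) HAB HJ Hirr.
have HO : orthogonal_mx Q by [].
have HR : regular Q by exact: Qe.
exists Q; split => //.
case: Hs => Hs; [left|right].
- have EQ := block_sign_pos Hs.
  exists (ulsubmx Q), (drsubmx Q).
  rewrite EQ in HO HR; have [? ? ? ?] := diag_orth HO HR; by split.
- have EQ := block_sign_neg Hs.
  exists (ursubmx Q), (dlsubmx Q).
  rewrite EQ in HO HR; have [? ? ? ?] := anti_orth HO HR; by split.
Qed.
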